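(* For every resource $e$, every nonempty set $S\subseteq[N]$ of players and every permutation $\psi$ of $S$, $$\sum_{i\in S} f_{i,e}\big(S^i(\psi)\cup\{i\}\big)=\sum_{k=1}^{|S|}\Big(\frac{\sigma_e}{k}+\sum_{T\subseteq S,\,|T|=k}\frac{h_e(T)}{\binom{|S|}{k}\cdot k}\Big),$$ where $S^i(\psi)$ is the set of players preceding $i$ in $\psi$ and $f_{i,e}(X)$ denotes the Shapley cost share of player $i\in X$ on $e$ when the set of players using $e$ is $X$.
   Context: Players $i\in[N]$ have weights $w_i(e)\in\mathbb{Z}_{\ge1}$ on resource $e$. Resource $e$ has parameters $\sigma_e\ge0$, $\xi_{e,1},\dots,\xi_{e,q}\ge0$ (at least one positive) and exponents $\alpha_1,\dots,\alpha_q>1$; its cost function is $F_e(0)=0$, $F_e(l)=\sigma_e+\sum_j\xi_{e,j}l^{\alpha_j}$ for $l>0$. Define $h_e(X)=\sum_{j\in[q]}\xi_{e,j}\big(\sum_{i\in X}w_i(e)\big)^{\alpha_j}$ for $X\subseteq[N]$. The Shapley cost share of $i\in X$ on $e$ when $X$ is the set of users of $e$ is $f_{i,e}(X)=\mathbb{E}\big[F_e\big(\sum_{i'\in X^i(\pi)}w_{i'}(e)+w_i(e)\big)-F_e\big(\sum_{i'\in X^i(\pi)}w_{i'}(e)\big)\big]$, where $\pi$ is a uniformly random permutation of $X$ and $X^i(\pi)$ is the set of players preceding $i$ in $\pi$. *)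

(* Defs.v *)
From HB Require Import structures.
From mathcomp Require Import all_boot all_order all_algebra.
From mathcomp Require Import all_classical all_reals all_analysis.
Set Implicit Arguments. Unset Strict Implicit. Unset Printing Implicit Defensive.
Import Order.TTheory GRing.Theory Num.Theory.
Local Open Scope ring_scope.

(* One fixed resource e.  Players are 'I_N.  w i = w_i(e) (natural number >= 1),
   sigma = sigma_e, xi j = xi_{e,j}, alpha j = alpha_j, j : 'I_q. *)

Definition load N (w : 'I_N -> nat) (X : {set 'I_N}) : nat := \sum_(i in X) w i.

Definition Fcost (R : realType) q (sigma : R) (xi alpha : 'I_q -> R) (l : nat) : R :=
  if l == 0%N then 0 else sigma + \sum_(j < q) xi j * (l%:R `^ alpha j).

Definition hfun (R : realType) N q (w : 'I_N -> nat) (xi alpha : 'I_q -> R)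
    (X : {set 'I_N}) : R :=
  \sum_(j < q) xi j * ((load w X)%:R `^ alpha j).

Definition preds N (s : seq 'I_N) (i : 'I_N) : {set 'I_N} :=
  [set j in take (index i s) s].

(* Shapley cost share f_{i,e}(X): expectation over a uniformly random permutation
   pi of X (the permutations of X are the orderings in permutations (enum X),
   which are pairwise distinct, |X|! of them) of the marginal cost of i. *)
Definition shapley (R : realType) N q (w : 'I_N -> nat) (sigma : R)
    (xi alpha : 'I_q -> R) (X : {set 'I_N}) (i : 'I_N) : R :=
  (size (permutations (enum X)))%:R^-1 *
  \sum_(pi <- permutations (enum X))
     (Fcost sigma xi alpha (load w (preds pi i) + w i)
      - Fcost sigma xi alpha (load w (preds pi i))).

(* Main.v *)
Require Import Defs.
From HB Require Import structures.
From mathcomp Require Import all_boot all_order all_algebra.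
From mathcomp Require Import all_classical all_reals all_analysis.
From mathcomp Require Import ring lra zify.
Import Order.TTheory GRing.Theory Num.Theory.
Local Open Scope ring_scope.

Lemma sum_const_seq (R : realType) (T : Type) (s : seq T) (c : R) :
  \sum_(x <- s) c = c *+ size s.
Proof. by elim: s => [|x s IH]; rewrite ?big_nil ?big_cons ?IH ?mulrS. Qed.

Lemma not_in_preds N (s : seq 'I_N) i : i \notin preds s i.
Proof.
rewrite inE; apply/negP => /index_ltn; by rewrite ltnn.
Qed.

Lemma split_perms (R : realType) N (X : {set 'I_N}) (i : 'I_N)
  (g : seq 'I_N -> R) : i \in X ->
  \sum_(pi <- permutations (enum X)) g pi =
  \sum_(T : {set 'I_N} | T \subset X :\ i)
    \sum_(a <- permutations (enum T))
      \sum_(b <- permutations (enum (X :\ i :\: T))) g (a ++ i :: b).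
Proof.
move=> iX.
have step1 : \sum_(pi <- permutations (enum X)) g pi =
  \sum_(pi <- permutations (enum X)) \sum_(T : {set 'I_N} | T \subset X :\ i)
     (if preds pi i == T then g pi else 0).
  apply: eq_big_seq => pi; rewrite mem_permutations => hpi.
  rewrite (bigD1 (preds pi i)) /=; last first.
    apply/fintype.subsetP => x; rewrite !inE => hx.
    have := mem_take hx; rewrite (perm_mem hpi) mem_enum => ->; rewrite andbT.
    by apply/eqP => exi; move: hx; rewrite exi => /index_ltn; rewrite ltnn.
  rewrite eqxx big1 ?addr0 // => T /andP [_ hT]; by rewrite eq_sym (negbTE hT).
rewrite step1 exchange_big /=; apply: eq_bigr => T hT.
rewrite -big_mkcond /= -big_filter.
rewrite -(big_allpairs_dep (h:=fun a b => a ++ i :: b)).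
apply: perm_big.
have notiT : i \notin T.
  by apply/negP => /(fintype.subsetP hT); rewrite !inE eqxx.
apply: uniq_perm.
- by rewrite filter_uniq // permutations_uniq.
- apply: allpairs_uniq; rewrite ?permutations_uniq //.
  move=> [a b] [a' b'] /allpairsP [[a1 b1] /= [ha hb [-> ->]]].
  move=> /allpairsP [[a2 b2] /= [ha' hb' [-> ->]]] /= /eqP.
  rewrite eqseq_cat; first by case/andP => /eqP -> /eqP [->].
  rewrite mem_permutations in ha; rewrite mem_permutations in ha'.
  by rewrite (perm_size ha) (perm_size ha').
move=> pi; rewrite mem_filter mem_permutations; apply/andP/allpairsP.
- case=> /eqP hpre hpi.
  have ipi : i \in pi by rewrite (perm_mem hpi) mem_enum.
  have upi : uniq pi by rewrite (perm_uniq hpi) enum_uniq.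
  set a := take (index i pi) pi; set b := drop (index i pi).+1 pi.
  have e : pi = a ++ i :: b.
    by rewrite -{1}(cat_take_drop (index i pi) pi) (drop_nth i) ?index_mem // nth_index.
  exists (a, b) => /=; split => //.
  + rewrite mem_permutations; apply: uniq_perm; rewrite ?take_uniq ?enum_uniq //.
    by move=> x; rewrite mem_enum -hpre inE.
  + rewrite mem_permutations; apply: uniq_perm; rewrite ?drop_uniq ?enum_uniq //.
    move: upi; rewrite e cat_uniq => /and3P [_ hab]; rewrite cons_uniq => /andP [ib _].
    move=> x; rewrite mem_enum !inE -hpre inE.
    have -> : (x \in X) = (x \in a ++ i :: b) by rewrite -e (perm_mem hpi) mem_enum.
    rewrite -/a mem_cat in_cons.
    case xb: (x \in b).
      have xa : x \notin a by apply: (hasPn hab); rewrite in_cons xb orbT.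
      have xi : x != i by apply/eqP => exi; move: ib; rewrite -exi xb.
      by rewrite (negbTE xa) xi orbT.
    by case: (x \in a); case: eqP.
- case=> [[a b]] /= [ha hb ->].
  rewrite mem_permutations in ha; rewrite mem_permutations in hb.
  have ia : i \notin a by rewrite (perm_mem ha) mem_enum.
  split.
    rewrite /preds take_pivot //; apply/eqP/setP => x.
    by rewrite inE (perm_mem ha) mem_enum.
  apply: uniq_perm; rewrite ?enum_uniq //.
    rewrite cat_uniq cons_uniq (perm_uniq ha) (perm_uniq hb) !enum_uniq andbT.
    apply/andP; split => //; apply/andP; split; last first.
      by rewrite (perm_mem hb) mem_enum !inE eqxx /= andbF.
    apply/hasPn => x; rewrite in_cons (perm_mem ha) (perm_mem hb) !mem_enum.
    by case/orP => [/eqP -> //| ]; rewrite !inE => /andP [].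
  move=> x; rewrite mem_cat in_cons (perm_mem ha) (perm_mem hb) !mem_enum !inE.
  case xT: (x \in T).
    by move: (fintype.subsetP hT x xT); rewrite !inE => /andP [_ ->].
  by case: eqP => [->|] //=; rewrite iX.
Qed.

Section Pot.
Variables (R : realType) (N q : nat) (w : 'I_N -> nat) (sigma : R)
  (xi alpha : 'I_q -> R).

Definition Cc (T : {set 'I_N}) : R := Fcost sigma xi alpha (load w T).
Definition cf (m k : nat) : R := ((k.-1)`! * (m - k)`!)%:R / (m`!)%:R.
Definition Pot (X : {set 'I_N}) : R :=
  \sum_(T : {set 'I_N} | T \subset X) cf #|X| #|T| * Cc T.

Lemma load_U1 (i : 'I_N) (T : {set 'I_N}) : i \notin T -> load w (i |: T) = (load w T + w i)%N.
Proof. by move=> iT; rewrite /load big_setU1 //= addnC. Qed.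

Lemma shapley_fact (X : {set 'I_N}) (i : 'I_N) : i \in X ->
  shapley w sigma xi alpha X i * ((#|X|)`!)%:R =
  \sum_(T : {set 'I_N} | T \subset X :\ i)
     (((#|T|)`! * (#|X :\ i| - #|T|)`!)%:R * (Cc (i |: T) - Cc T)).
Proof.
move=> iX; rewrite /shapley size_permutations ?enum_uniq // -cardE.
rewrite mulrC mulrA mulfV ?mul1r ?pnatr_eq0 -?lt0n ?fact_gt0 //.
rewrite (@split_perms R N X i _ iX); apply: eq_bigr => T hT.
have notiT : i \notin T.
  by apply/negP => /(fintype.subsetP hT); rewrite !inE eqxx.
transitivity (\sum_(a <- permutations (enum T))
   \sum_(b <- permutations (enum (X :\ i :\: T))) (Cc (i |: T) - Cc T)).
  apply: eq_big_seq => a; rewrite mem_permutations => ha.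
  have ia : i \notin a by rewrite (perm_mem ha) mem_enum.
  apply: eq_bigr => b _.
  rewrite /preds take_pivot //.
  have -> : [set j in a] = T by apply/setP => x; rewrite inE (perm_mem ha) mem_enum.
  by rewrite /Cc load_U1.
rewrite !sum_const_seq !size_permutations ?enum_uniq // -!cardE (cardsDS hT).
by rewrite -mulrnA mulr_natl mulnC.
Qed.

Lemma cf_diff m k : (0 < k)%N -> (k <= m)%N ->
  cf m.+1 k - cf m k = - (((k)`! * (m - k)`!)%:R / ((m.+1)`!)%:R).
Proof.
case: k => // k _ le.
have [j ->] : exists j, m = (k.+1 + j)%N by exists (m - k.+1)%N; rewrite subnKC.
rewrite /cf /=.
have -> : ((k.+1 + j).+1 - k.+1 = j.+1)%N by lia.
have -> : ((k.+1 + j) - k.+1 = j)%N by lia.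
set M := (k.+1 + j)%N.
have eM : (M.+1)%:R = ((k%:R + 1) + (j%:R + 1)) :> R.
  by rewrite !natr1 -natrD; congr (_%:R); rewrite /M; lia.
clearbody M.
rewrite (factS j) (factS k) (factS M) !natrM eM -[(j.+1)%:R]natr1 -[(k.+1)%:R]natr1.
have h1 : ((k)`!)%:R != 0 :> R by rewrite pnatr_eq0 -lt0n fact_gt0.
have h2 : ((j)`!)%:R != 0 :> R by rewrite pnatr_eq0 -lt0n fact_gt0.
have h3 : ((M)`!)%:R != 0 :> R by rewrite pnatr_eq0 -lt0n fact_gt0.
have h4 : (k%:R + 1 + (j%:R + 1)) != 0 :> R.
  by rewrite !natr1 -natrD pnatr_eq0.
field.
by rewrite h3 h4.
Qed.

Lemma Cc0 : Cc finset.set0 = 0.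
Proof. by rewrite /Cc /load big_set0 /Fcost eqxx. Qed.

Lemma Pot_diff (X : {set 'I_N}) (i : 'I_N) : i \in X ->
  shapley w sigma xi alpha X i = Pot X - Pot (X :\ i).
Proof.
move=> iX.
have fn : ((#|X|)`!)%:R != 0 :> R by rewrite pnatr_eq0 -lt0n fact_gt0.
have -> : shapley w sigma xi alpha X i =
   ((#|X|)`!)%:R^-1 * (shapley w sigma xi alpha X i * ((#|X|)`!)%:R).
  by rewrite mulrC -mulrA mulfV ?mulr1.
rewrite shapley_fact // [Pot X](bigID (fun T : {set 'I_N} => i \in T)) /=.
have -> : \sum_(T : {set 'I_N} | (T \subset X) && (i \notin T)) cf #|X| #|T| * Cc T =
   \sum_(T : {set 'I_N} | T \subset X :\ i) cf #|X| #|T| * Cc T.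
  by apply: eq_bigl => T; rewrite finset.subsetD1.
have -> : \sum_(T : {set 'I_N} | (T \subset X) && (i \in T)) cf #|X| #|T| * Cc T =
   \sum_(U : {set 'I_N} | U \subset X :\ i) cf #|X| #|i |: U| * Cc (i |: U).
  rewrite (reindex_onto (fun U : {set 'I_N} => i |: U) (fun T => T :\ i)) /=; last first.
    by move=> T /andP [_ iT]; rewrite finset.setD1K.
  apply: eq_bigl => U; rewrite finset.setU11 /= finset.subsetD1 andbT.
  case iU: (i \in U); last by rewrite finset.setU1K ?iU // eqxx finset.subUset finset.sub1set iX.
  rewrite andbF; apply/negbTE; apply/nandP; right; apply/eqP => e.
  by move: iU; rewrite -e !inE eqxx.
rewrite /Pot -big_split -sumrB mulr_sumr; apply: eq_bigr => T hT /=.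
have notiT : i \notin T.
  by apply/negP => /(fintype.subsetP hT); rewrite !inE eqxx.
have km : (#|T| <= #|X :\ i|)%N by apply: subset_leq_card.
move: fn km; set m := #|X :\ i|; set k := #|T| => fn km.
have hn : #|X| = m.+1 by rewrite (cardsD1 i X) iX.
rewrite finset.cardsU1 notiT add1n hn.
rewrite hn in fn.
have e1 : cf m.+1 k.+1 = ((k`! * (m - k)`!)%:R / ((m.+1)`!)%:R) by rewrite /cf /= subSS.
rewrite e1.
case: (posnP k) => k0.
  have -> : T = finset.set0 by apply/eqP; rewrite -cards_eq0 -/k k0.
  rewrite Cc0 k0; field; exact: fn.
have hd := @cf_diff m k k0 km.
have -> : cf m.+1 k = cf m k - (k`! * (m - k)`!)%:R / (m.+1)`!%:R.
  by rewrite -hd; ring.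
field; exact: fn.
Qed.

Lemma Pot_set0 : Pot finset.set0 = 0.
Proof.
rewrite /Pot big1 // => T hT.
have -> : T = finset.set0.
  apply/setP => x; rewrite inE; apply/negbTE/negP => xT.
  by move: (fintype.subsetP hT x xT); rewrite inE.
by rewrite Cc0 mulr0.
Qed.

Lemma telescope_shapley (s : seq 'I_N) : uniq s ->
  \sum_(i <- s) shapley w sigma xi alpha (preds s i :|: [set i]) i =
  Pot [set j in s].
Proof.
elim/last_ind: s => [|s x IH] u.
  rewrite big_nil -Pot_set0; congr Pot; apply/setP => x; by rewrite !inE.
move: u; rewrite rcons_uniq => /andP [xs u].
rewrite big_rcons /= -cats1.
have ps : forall j, j \in s -> preds (s ++ [:: x]) j = preds s j.
  move=> j js; rewrite /preds index_cat js takel_cat //.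
  by apply: ltnW; rewrite index_mem.
rewrite (eq_big_seq (fun i => shapley w sigma xi alpha (preds s i :|: [set i]) i)); last first.
  by move=> j js /=; rewrite ps.
rewrite IH //.
have px : preds (s ++ [:: x]) x = [set j in s].
  by rewrite /preds index_cat (negbTE xs) /= eqxx addn0 take_size_cat.
rewrite px Pot_diff; last by rewrite !inE eqxx orbT.
have -> : ([set j in s] :|: [set x]) :\ x = [set j in s].
  apply/setP => j; rewrite !inE.
  by case: eqP => [->|] /=; [rewrite (negbTE xs) | rewrite orbF].
rewrite addrC subrK; congr Pot.
by apply/setP => j; rewrite !inE mem_cat inE.
Qed.

Lemma cfk n k : (0 < k)%N -> (k <= n)%N -> cf n k = 1 / ('C(n, k)%:R * k%:R).
Proof.
case: k => // k _ le; rewrite /cf /=.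
have e := bin_fact le; rewrite -e factS !natrM.
have h1 : ('C(n, k.+1))%:R != 0 :> R by rewrite pnatr_eq0 -lt0n bin_gt0.
have h2 : ((k)`!)%:R != 0 :> R by rewrite pnatr_eq0 -lt0n fact_gt0.
have h3 : ((n - k.+1)`!)%:R != 0 :> R by rewrite pnatr_eq0 -lt0n fact_gt0.
have h4 : (k.+1)%:R != 0 :> R by rewrite pnatr_eq0.
field.
by rewrite h1 h2 h3 addrC natr1 h4.
Qed.

Lemma Cc_pos (hw : forall i, (1 <= w i)%N) (T : {set 'I_N}) :
  T != finset.set0 -> Cc T = sigma + hfun w xi alpha T.
Proof.
case/set0Pn => x xT; rewrite /Cc /Fcost /hfun.
have -> : (load w T == 0)%N = false.
  rewrite /load (bigD1 x) //=; apply/negbTE; rewrite -lt0n.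
  by apply: (leq_trans (hw x)); apply: leq_addr.
by [].
Qed.

Lemma Pot_closed (hw : forall i, (1 <= w i)%N) (S : {set 'I_N}) :
  Pot S = \sum_(1 <= k < #|S|.+1)
     (sigma / k%:R +
      \sum_(T : {set 'I_N} | (T \subset S) && (#|T| == k))
         hfun w xi alpha T / ('C(#|S|, k)%:R * k%:R)).
Proof.
rewrite /Pot (partition_big (fun T : {set 'I_N} => (inord #|T| : 'I_(#|S|).+1)) xpredT) //=.
have -> : \sum_(j < #|S|.+1) \sum_(T : {set 'I_N} | (T \subset S) && (inord #|T| == j))
     cf #|S| #|T| * Cc T =
   \sum_(j < #|S|.+1) \sum_(T : {set 'I_N} | (T \subset S) && (#|T| == j))
     cf #|S| #|T| * Cc T.
  apply: eq_bigr => j _; apply: eq_bigl => T.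
  case TS: (T \subset S) => //=.
  by rewrite -val_eqE /= inordK // ltnS subset_leq_card.
rewrite -(big_mkord xpredT (fun j => \sum_(T : {set 'I_N} | (T \subset S) && (#|T| == j))
     cf #|S| #|T| * Cc T)).
rewrite big_ltn // big1 ?add0r; last first.
  move=> T /andP [_ /eqP c0].
  have -> : T = finset.set0 by apply/eqP; rewrite -cards_eq0 c0.
  by rewrite Cc0 mulr0.
apply: eq_big_nat => k /andP [k1 kn]; rewrite ltnS in kn.
have hk : k%:R != 0 :> R by rewrite pnatr_eq0 -lt0n.
have hC : ('C(#|S|, k))%:R != 0 :> R by rewrite pnatr_eq0 -lt0n bin_gt0.
rewrite (eq_bigr (fun T => cf #|S| k * sigma + hfun w xi alpha T / ('C(#|S|,k)%:R * k%:R))); last first.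
  move=> T /andP [TS /eqP ck]; rewrite ck Cc_pos //; last first.
    by rewrite -cards_eq0 ck -lt0n.
  by rewrite cfk //; field; rewrite hC hk.
rewrite big_split /=; congr (_ + _).
rewrite (eq_bigl (fun T => T \in [set A : {set 'I_N} | A \subset S & #|A| == k])); last first.
  by move=> T; rewrite inE.
rewrite sumr_const cards_draws cfk // -mulr_natr.
by field; rewrite hC hk.
Qed.
End Pot.

Theorem lemma7p1 (R : realType) (N q : nat) (w : 'I_N -> nat) (sigma : R)
    (xi alpha : 'I_q -> R)
    (hw : forall i, (1 <= w i)%N)
    (hsigma : 0 <= sigma)
    (hxi : forall j, 0 <= xi j)
    (hxi_pos : exists j, 0 < xi j)
    (halpha : forall j, 1 < alpha j)
    (S : {set 'I_N}) (hS : (0 < #|S|)%N)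
    (psi : seq 'I_N) (hpsi : perm_eq psi (enum S)) :
  \sum_(i in S) shapley w sigma xi alpha (preds psi i :|: [set i]) i =
  \sum_(1 <= k < #|S|.+1)
     (sigma / k%:R +
      \sum_(T : {set 'I_N} | (T \subset S) && (#|T| == k))
         hfun w xi alpha T / ('C(#|S|, k)%:R * k%:R)).
Proof.
rewrite -big_enum -(perm_big _ hpsi) telescope_shapley; last first.
  by rewrite (perm_uniq hpsi) enum_uniq.
have -> : [set j in psi] = S.
  by apply/setP => j; rewrite inE (perm_mem hpsi) mem_enum.
exact: Pot_closed.
Qed.
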